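(* Let $G=(V,E,w)$ be an undirected weighted graph such that $w(e)<1$ for every $e\in E$ and every vertex has at most $3$ neighbors. Then $\chi_w(G)\le 2$.
   Context: An undirected weighted graph $G=(V,E,w)$ with $w:E\to[0,1]$ is regarded as a weighted digraph in which each edge $\{u,v\}$ gives arcs $(u,v)$ and $(v,u)$ of weight $w(\{u,v\})$. A $k$-coloring is a map $c:V\to\{1,\dots,k\}$, and $c[v]$ denotes the set of vertices with color $c(v)$. For $S\subseteq V$, $d^-_S(v)=\sum_{u\in S,(u,v)\in E}w(u,v)$. A weighted improper $k$-coloring is a $k$-coloring with $d^-_{c[v]}(v)<1$ for every $v$, and $\chi_w(G)$ is the minimum $k$ for which one exists. *)

(* Defs.v *)
From mathcomp Require Import all_boot all_order all_algebra.
Set Implicit Arguments. Unset Strict Implicit. Unset Printing Implicit Defensive.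
Import Order.TTheory GRing.Theory Num.Theory.
Local Open Scope ring_scope.

(* An undirected weighted graph on a finite vertex type V is given by a
   symmetric irreflexive adjacency relation e and a symmetric weight w
   (only its values on edges matter). Each edge {u,v} yields the arcs
   (u,v) and (v,u) of weight w u v = w v u. *)

Section WColor.
Variables (R : realFieldType) (V : finType) (e : rel V) (w : V -> V -> R).

Definition in_deg (S : {set V}) (v : V) : R :=
  \sum_(u in S | e u v) w u v.

Definition color_class (k : nat) (c : {ffun V -> 'I_k}) (v : V) : {set V} :=
  [set u | c u == c v].

Definition wimproper (k : nat) (c : {ffun V -> 'I_k}) : bool :=
  [forall v, in_deg (color_class c v) v < 1].

Definition wcolorable (k : nat) : bool :=
  [exists c : {ffun V -> 'I_k}, wimproper c].

Hypothesis e_irr : irreflexive e.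

Lemma wcolorable_card : wcolorable #|V|.
Proof.
apply/existsP; exists [ffun v => enum_rank v]; apply/forallP => v.
rewrite /in_deg big1 ?ltr01 // => u /andP[].
rewrite inE !ffunE => /eqP /enum_rank_inj -> ; by rewrite e_irr.
Qed.

Lemma wcolorable_ex : exists k, wcolorable k.
Proof. by exists #|V|; apply: wcolorable_card. Qed.

Definition chi_w : nat := ex_minn wcolorable_ex.

End WColor.

(* Main.v *)
Require Import Defs.
From mathcomp Require Import all_boot all_order all_algebra.
Import Order.TTheory GRing.Theory Num.Theory.
From mathcomp Require Import zify.
From Stdlib Require Import Lia.
Local Open Scope ring_scope.

Definition flip2 (i : 'I_2) : 'I_2 := if i == ord0 then ord_max else ord0.

Lemma flip2E (i j : 'I_2) : (j == flip2 i) = (j != i).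
Proof.
by case: i => [[|[|//]]] Hi; case: j => [[|[|//]]] Hj; rewrite /flip2 /=.
Qed.

Lemma flip2_neq (i : 'I_2) : (flip2 i == i) = false.
Proof. by rewrite eq_sym flip2E eqxx. Qed.

Lemma sum_small (R : realFieldType) (V : finType) (A : {set V}) (f : V -> R) :
  (#|A| <= 1)%N -> (forall u, u \in A -> 0 <= f u /\ f u < 1) ->
  \sum_(u in A) f u < 1.
Proof.
rewrite leq_eqVlt ltnS leqn0 => /orP[/cards1P [a ->] H|/eqP/cards0_eq -> _].
  by rewrite big_set1; case: (H a (set11 a)).
by rewrite big_set0 ltr01.
Qed.

Theorem lemma3p1 (R : realFieldType) (V : finType) (e : rel V)
    (w : V -> V -> R) (e_sym : symmetric e) (e_irr : irreflexive e)
    (w_sym : forall u v, w u v = w v u)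
    (w_range : forall u v, e u v -> 0 <= w u v /\ w u v < 1)
    (deg3 : forall v, (#|[set u | e v u]| <= 3)%N) :
  (chi_w w e_irr <= 2)%N.
Proof.
rewrite /chi_w; case: ex_minnP => m _ Hmin; apply: Hmin.
pose f (c : {ffun V -> 'I_2}) u x : R :=
  if e u x && (c u == c x) then w u x else 0.
pose Phi c := \sum_u \sum_x f c u x.
have c0 : {ffun V -> 'I_2} := [ffun=> ord0].
case: (@arg_minP _ _ _ c0 predT Phi isT) => c _ cmin.
apply/existsP; exists c; apply/forallP => v.
pose h y : R := if e v y then (if c y == c v then - w v y else w v y) else 0.
pose c' : {ffun V -> 'I_2} := [ffun x => if x == v then flip2 (c v) else c x].
have Hdiff : Phi c' - Phi c = (\sum_y h y) *+ 2.
  have pt : forall u x, f c' u x - f c u x =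
      (if u == v then h x else 0) + (if x == v then h u else 0).
    move=> u x; rewrite /f /h !ffunE.
    case: (eqVneq u v) => [->|Huv]; case: (eqVneq x v) => [->|Hxv].
    - by rewrite e_irr /= !addr0 subrr.
    - rewrite [flip2 _ == _]eq_sym flip2E addr0 [c x == c v]eq_sym.
      by case: (e v x) => /=; case: (c v == c x) => /=; rewrite ?subr0 ?sub0r.
    - rewrite flip2E add0r e_sym w_sym.
      by case: (e v u) => /=; case: (c u == c v) => /=; rewrite ?subr0 ?sub0r.
    - by rewrite subrr addr0.
  rewrite /Phi -sumrB.
  under eq_bigr => u _ do rewrite -sumrB.
  under eq_bigr => u _ do under eq_bigr => x _ do rewrite pt.
  rewrite mulr2n; under eq_bigr => u _ do rewrite big_split /=.
  rewrite big_split /=; congr (_ + _).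
    rewrite (bigD1 v) //= [X in _ + X]big1 ?addr0 => [|u /negPf ->].
      by apply: eq_bigr => x _; rewrite eqxx.
    by rewrite big1.
  rewrite exchange_big /=.
  rewrite (bigD1 v) //= [X in _ + X]big1 ?addr0 => [|u /negPf ->].
  by apply: eq_bigr => x _; rewrite eqxx.
  by rewrite big1.
have Hh : 0 <= \sum_y h y.
  have := cmin c' isT; rewrite -subr_ge0 Hdiff.
  by rewrite pmulrn_lge0.
pose A := [set u | e v u && (c u == c v)].
pose B := [set u | e v u && (c u != c v)].
have HA : \sum_y h y = \sum_(u in B) w v u - \sum_(u in A) w v u.
  rewrite [X in _ = X - _]big_mkcond [X in _ = _ - X]big_mkcond -sumrB.
  apply: eq_bigr => y _; rewrite /h !inE.
  by case: (e v y); case: (c y == c v); rewrite /= ?subr0 ?sub0r ?subrr.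
have Hin : in_deg e w (color_class c v) v = \sum_(u in A) w v u.
  rewrite /in_deg; apply: eq_big => u; first by rewrite !inE e_sym andbC.
  by move=> _; rewrite w_sym.
rewrite Hin.
have Hcard : (#|A| + #|B| <= 3)%N.
  rewrite -cardsUI.
  have -> : A :&: B = set0.
    by apply/setP => u; rewrite !inE; case: (c u == c v); rewrite ?andbF.
  rewrite cards0 addn0; apply: leq_trans (deg3 v); apply: subset_leq_card.
  by apply/subsetP => u; rewrite !inE => /orP[/andP[]|/andP[]].
have rA : forall u, u \in A -> 0 <= w v u /\ w v u < 1.
  by move=> u; rewrite inE => /andP[/w_range].
have rB : forall u, u \in B -> 0 <= w v u /\ w v u < 1.
  by move=> u; rewrite inE => /andP[/w_range].
case: (leqP #|A| 1) => HA1; first exact: sum_small.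
have HB1 : (#|B| <= 1)%N by move: HA1 Hcard; lia.
rewrite ltNge; apply/negP => H1.
have := @sum_small _ _ B (w v) HB1 rB; rewrite ltNge => /negP; apply.
by apply: le_trans H1 _; rewrite -subr_ge0 -HA.
Qed.
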